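(* Let $N\ge 1$, let $\mathbf{W}^0$ be a real $N\times N$ matrix (the adjacency matrix), let $a,w\in\mathbb{R}$ and $S_x>0$, and assume the spectral radius of $a w\mathbf{W}^0$ is less than $1$. Define the (zero-frequency) cross-spectrum matrix $$\mathbf{S}_y=S_x\,(\mathbf{I}-a w\mathbf{W}^0)^{-1}(\mathbf{I}-a w(\mathbf{W}^0)^T)^{-1},$$ and set $g=N a w$. Let $\kappa_n$ ($n\ge1$) and $\kappa_{n,m}$ ($n,m\ge1$) be the motif cumulants of $\mathbf{W}^0$ defined below, and assume $\sum_{n\ge1}|g|^n|\kappa_n|<1$ and $\sum_{n,m\ge1}|g|^{n+m}|\kappa_{n,m}|<\infty$. Then $$\frac{\langle \mathbf{S}_y\rangle}{S_x}=\frac{1}{N}\Big(1-\sum_{n=1}^\infty g^n\kappa_n\Big)^{-2}\Big(1+\sum_{n,m=1}^\infty g^{n+m}\kappa_{n,m}\Big).$$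
   Context: This models a network of $N$ linearly interacting stochastic units $y_i=x_i+A*\sum_j \mathbf{W}_{ij}y_j$ with $\mathbf{W}=w\mathbf{W}^0$, identical independent baseline processes $x_i$ of auto-spectrum $S_x$, and $a=\tilde A(0)$ the (real) zero-frequency value of the Fourier transform of the linear response kernel; $\mathbf{S}_y$ above is then the matrix of total covariances. Notation: for an $N\times N$ matrix $\mathbf{X}$, $\langle\mathbf{X}\rangle=\frac1{N^2}\sum_{i,j}\mathbf{X}_{ij}$ (empirical average of the entries). Motif moments: for integers $n,m\ge0$, $\mu_{n,m}=\langle(\mathbf{W}^0)^n((\mathbf{W}^0)^T)^m\rangle/N^{n+m-1}$, and $\mu_n:=\mu_{n,0}$ (so $\mu_{0,0}=1$). A composition of a positive integer $n$ is an ordered tuple $(n_1,\dots,n_t)$ of positive integers with $n_1+\dots+n_t=n$; $\mathcal{C}(n)$ denotes the set of compositions of $n$. Motif cumulants: the numbers $\kappa_n$ ($n\ge1$) and $\kappa_{n,m}$ ($n,m\ge1$) are defined recursively (uniquely) by requiring, for all $n,m\ge1$, $$\mu_n=\sum_{(n_1,\dots,n_t)\in\mathcal{C}(n)}\prod_{i=1}^t\kappa_{n_i},\qquad \mu_{n,m}=\sum_{\substack{(n_1,\dots,n_t)\in\mathcal{C}(n)\\(m_1,\dots,m_s)\in\mathcal{C}(m)}}\Big(\prod_{i=2}^t\kappa_{n_i}\Big)\big(\kappa_{n_1,m_1}+\kappa_{n_1}\kappa_{m_1}\big)\Big(\prod_{j=2}^s\kappa_{m_j}\Big),$$ where an empty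 product equals $1$. *)

(* Defs.v *)
(* real numbers (Stdlib Reals) are needed for infinite series.
   N x N real matrices are represented as functions nat -> nat -> R, of which
   only the entries with indices < N are ever used. *)
From Stdlib Require Import Reals List ClassicalEpsilon.
Import ListNotations.
Open Scope R_scope.

Definition mat := nat -> nat -> R.
Definition vec := nat -> R.

Fixpoint fsum (n : nat) (f : nat -> R) : R :=
  match n with
  | O => 0
  | S k => fsum k f + f k
  end.

Definition mmul (N : nat) (A B : mat) : mat :=
  fun i j => fsum N (fun k => A i k * B k j).
Definition mid : mat := fun i j => if Nat.eqb i j then 1 else 0.
Definition mtr (A : mat) : mat := fun i j => A j i.
Definition mscale (c : R) (A : mat) : mat := fun i j => c * A i j.
Definition msub (A B : mat) : mat := fun i j => A i j - B i j.
Fixpoint mpow (N : nat) (A : mat) (n : nat) : mat :=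
  match n with
  | O => mid
  | S k => mmul N A (mpow N A k)
  end.
Definition mvec (N : nat) (A : mat) (x : vec) : vec :=
  fun i => fsum N (fun j => A i j * x j).

Definition meq (N : nat) (A B : mat) : Prop :=
  forall i j, (i < N)%nat -> (j < N)%nat -> A i j = B i j.

(* the inverse matrix (chosen by epsilon; unique on indices < N when it exists) *)
Definition minv (N : nat) (A : mat) : mat :=
  epsilon (inhabits (fun _ _ => 0))
    (fun B => meq N (mmul N A B) mid /\ meq N (mmul N B A) mid).

(* spectral radius of A is < 1: every complex eigenvalue p + i q (with complex
   eigenvector x + i y, written out in real and imaginary parts) has modulus < 1 *)
Definition spectral_radius_lt1 (N : nat) (A : mat) : Prop :=
  forall (p q : R) (x y : vec),
    (exists i, (i < N)%nat /\ (x i <> 0 \/ y i <> 0)) ->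
    (forall i, (i < N)%nat ->
       mvec N A x i = p * x i - q * y i /\ mvec N A y i = q * x i + p * y i) ->
    p * p + q * q < 1.

Definition mavg (N : nat) (X : mat) : R :=
  fsum N (fun i => fsum N (fun j => X i j)) / (INR N ^ 2).

Definition mu (N : nat) (W0 : mat) (n m : nat) : R :=
  mavg N (mmul N (mpow N W0 n) (mpow N (mtr W0) m))
  / powerRZ (INR N) (Z.of_nat (n + m) - 1)%Z.

(* compositions of n: lists of positive integers summing to n
   (first part k+1, then a composition of the rest); fuel >= n suffices *)
Fixpoint compsF (fuel n : nat) : list (list nat) :=
  match fuel with
  | O => match n with O => [ [] ] | S _ => [] end
  | S f => match n with
           | O => [ [] ]
           | S _ => flat_map (fun k => map (cons (S k)) (compsF f (n - S k)))
                             (seq 0 n)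
           end
  end.
Definition compositions (n : nat) : list (list nat) := compsF n n.

Definition lsum (l : list R) : R := fold_right Rplus 0 l.
Definition lprod (l : list R) : R := fold_right Rmult 1 l.

Definition motif_cumulants (N : nat) (W0 : mat)
    (kap : nat -> R) (kap2 : nat -> nat -> R) : Prop :=
  (forall n, (1 <= n)%nat ->
     mu N W0 n 0 = lsum (map (fun c => lprod (map kap c)) (compositions n))) /\
  (forall n m, (1 <= n)%nat -> (1 <= m)%nat ->
     mu N W0 n m =
     lsum (flat_map (fun c1 => map (fun c2 =>
        match c1, c2 with
        | n1 :: r1, m1 :: r2 =>
            lprod (map kap r1) * (kap2 n1 m1 + kap n1 * kap m1) * lprod (map kap r2)
        | _, _ => 0
        end) (compositions m)) (compositions n))).

Definition Sy (N : nat) (Sx : R) (A : mat) : mat :=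
  mscale Sx (mmul N (minv N (msub mid A)) (minv N (msub mid (mtr A)))).

Definition dsum (K : nat) (f : nat -> nat -> R) : R :=
  fsum K (fun i => fsum K (fun j => f (S i) (S j))).

(* Main.v *)
Require Import Defs.
From Stdlib Require Import Arith Reals Lra Lia List FunctionalExtensionality ClassicalEpsilon.
From mathcomp Require ssreflect ssrfun ssrbool eqtype ssrnat seq fintype bigop ssralg matrix Rstruct.
Import ListNotations.
Open Scope R_scope.

Module MC.
Import ssreflect ssrfun ssrbool eqtype ssrnat seq fintype bigop ssralg matrix Rstruct.
Import GRing.Theory.
Local Open Scope ring_scope.

Lemma fsumE (m : nat) (f : nat -> R) : fsum m f = (\sum_(k < m) f k)%R.
Proof.
elim: m => [|m IH] /=; first by rewrite big_ord0.
by rewrite big_ord_recr /= IH.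
Qed.

Lemma inv_exists (n : nat) (B : nat -> nat -> R) :
  (forall v : nat -> R, (forall i, lt i (S n) -> fsum (S n) (fun j => B i j * v j) = 0%R) ->
     forall i, lt i (S n) -> v i = 0%R) ->
  exists C : nat -> nat -> R,
    (forall i j, lt i (S n) -> lt j (S n) -> fsum (S n) (fun k => B i k * C k j) = mid i j) /\
    (forall i j, lt i (S n) -> lt j (S n) -> fsum (S n) (fun k => C i k * B k j) = mid i j).
Proof.
move=> inj.
pose M : 'M[R]_n.+1 := \matrix_(i, j) B i j.
have detM : \det M != 0%R.
  rewrite -det_tr; apply/negP => /det0P [v vn0 vM0].
  pose vf k := if (k < n.+1)%N then v ord0 (inord k) else 0%R.
  have H0 : forall i, lt i (S n) -> vf i = 0%R.
    apply: inj => i /ssrnat.ltP ilt.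
    have := congr1 (fun X : 'M[R]_(1, n.+1) => X ord0 (inord i)) vM0.
    rewrite !mxE => E; rewrite fsumE; apply: etrans E.
    apply: eq_bigr => j _; rewrite !mxE /vf ltn_ord inord_val inordK //.
    by rewrite mulrC.
  apply/negP: vn0; rewrite negbK; apply/eqP/matrixP => i j.
  rewrite (ord1 i) mxE.
  have := H0 j (ssrnat.ltP (ltn_ord j)); by rewrite /vf ltn_ord inord_val.
have uM : M \in unitmx by rewrite unitmxE unitfE.
exists (fun k j => invmx M (inord k) (inord j)); split => i j /ssrnat.ltP ilt /ssrnat.ltP jlt.
  have := congr1 (fun X : 'M[R]_n.+1 => X (inord i) (inord j)) (mulmxV uM).
  rewrite !mxE => E; rewrite fsumE.
  have -> : mid i j = (((inord i : 'I_n.+1) == inord j)%:R)%R.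
    rewrite /mid; case: (PeanoNat.Nat.eqb_spec i j) => [->|ne]; first by rewrite eqxx.
    case: eqP => // /(congr1 val); rewrite /= !inordK //.
  rewrite -E; apply: eq_bigr => k _; by rewrite !mxE inordK // inord_val.
have := congr1 (fun X : 'M[R]_n.+1 => X (inord i) (inord j)) (mulVmx uM).
rewrite !mxE => E; rewrite fsumE.
have -> : mid i j = (((inord i : 'I_n.+1) == inord j)%:R)%R.
  rewrite /mid; case: (PeanoNat.Nat.eqb_spec i j) => [->|ne]; first by rewrite eqxx.
  case: eqP => // /(congr1 val); rewrite /= !inordK //.
rewrite -E; apply: eq_bigr => k _; by rewrite !mxE inordK // inord_val.
Qed.
End MC.



Lemma fsum_ext n f g : (forall k, (k < n)%nat -> f k = g k) -> fsum n f = fsum n g.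
Proof. induction n; simpl; intros H; auto. rewrite IHn by (intros; apply H; lia). rewrite (H n) by lia; auto. Qed.

Lemma fsum_plus n f g : fsum n (fun k => f k + g k) = fsum n f + fsum n g.
Proof. induction n; simpl; [lra|]. rewrite IHn; lra. Qed.

Lemma fsum_minus n f g : fsum n (fun k => f k - g k) = fsum n f - fsum n g.
Proof. induction n; simpl; [lra|]. rewrite IHn; lra. Qed.

Lemma fsum_scal_l n c f : fsum n (fun k => c * f k) = c * fsum n f.
Proof. induction n; simpl; [lra|]. rewrite IHn; lra. Qed.

Lemma fsum_scal_r n c f : fsum n (fun k => f k * c) = fsum n f * c.
Proof. induction n; simpl; [lra|]. rewrite IHn; lra. Qed.

Lemma fsum_zero n f : (forall k, (k < n)%nat -> f k = 0) -> fsum n f = 0.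
Proof. intros H. rewrite (fsum_ext n f (fun _ => 0)) by auto. induction n; simpl; auto. rewrite IHn; [lra|]. intros; apply H; lia. Qed.

Lemma fsum_const n c : fsum n (fun _ => c) = INR n * c.
Proof. induction n; simpl fsum; [simpl; lra|]. rewrite IHn, S_INR; lra. Qed.

Lemma fsum_swap n m (f : nat -> nat -> R) :
  fsum n (fun i => fsum m (fun j => f i j)) = fsum m (fun j => fsum n (fun i => f i j)).
Proof.
  induction n; simpl.
  - symmetry; apply fsum_zero; auto.
  - rewrite IHn, <- fsum_plus; auto.
Qed.

Lemma fsum_shift n f : fsum (S n) f = f 0%nat + fsum n (fun i => f (S i)).
Proof. induction n; simpl in *; [lra|]. rewrite IHn; lra. Qed.

Lemma fsum_add_range K d f : fsum (K + d) f = fsum K f + fsum d (fun i => f (K + i)%nat).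
Proof. induction d; simpl. rewrite Nat.add_0_r; lra. rewrite Nat.add_succ_r; simpl; rewrite IHd; lra. Qed.

Lemma fsum_nonneg n f : (forall k, (k < n)%nat -> 0 <= f k) -> 0 <= fsum n f.
Proof. induction n; simpl; intros H; [lra|]. specialize (H n) as Hn. assert (0 <= fsum n f) by (apply IHn; intros; apply H; lia). assert (0 <= f n) by (apply H; lia). lra. Qed.

Lemma fsum_le n f g : (forall k, (k < n)%nat -> f k <= g k) -> fsum n f <= fsum n g.
Proof. induction n; simpl; intros H; [lra|]. assert (fsum n f <= fsum n g) by (apply IHn; intros; apply H; lia). assert (f n <= g n) by (apply H; lia). lra. Qed.

Lemma fsum_abs n f : Rabs (fsum n f) <= fsum n (fun k => Rabs (f k)).
Proof. induction n; simpl. rewrite Rabs_R0; lra. eapply Rle_trans; [apply Rabs_triang|]. lra. Qed.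

Lemma fsum_ge_term n f k : (forall i, (i < n)%nat -> 0 <= f i) -> (k < n)%nat -> f k <= fsum n f.
Proof.
  induction n; intros H Hk; [lia|]. simpl.
  destruct (Nat.eq_dec k n).
  - subst. assert (0 <= fsum n f) by (apply fsum_nonneg; intros; apply H; lia). lra.
  - assert (f k <= fsum n f) by (apply IHn; [intros; apply H; lia | lia]). assert (0 <= f n) by (apply H; lia). lra.
Qed.

Lemma sum_f_R0_fsum f n : sum_f_R0 f n = fsum (S n) f.
Proof. induction n; simpl in *; [lra|]. rewrite IHn; auto. Qed.

Lemma fsum_mid_l n k f : (k < n)%nat -> fsum n (fun j => mid k j * f j) = f k.
Proof.
  induction n; intros Hk; [lia|]. simpl.
  unfold mid at 2. destruct (Nat.eq_dec k n).
  - subst. rewrite Nat.eqb_refl. rewrite fsum_zero. lra. intros j Hj. unfold mid.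
    destruct (Nat.eqb_spec n j); [lia|]. lra.
  - rewrite IHn by lia. destruct (Nat.eqb_spec k n); [lia|]. lra.
Qed.

Lemma mid_sym i j : mid i j = mid j i.
Proof. unfold mid. rewrite Nat.eqb_sym; auto. Qed.

Lemma fsum_mid_r n k f : (k < n)%nat -> fsum n (fun j => f j * mid j k) = f k.
Proof. intros. rewrite <- (fsum_mid_l n k f) by auto. apply fsum_ext; intros. rewrite mid_sym; lra. Qed.

Lemma lsum_app l1 l2 : lsum (l1 ++ l2) = lsum l1 + lsum l2.
Proof. induction l1; simpl; [lra|]. rewrite IHl1; lra. Qed.

Lemma lsum_flat_map {A B} (f : B -> R) (g : A -> list B) l :
  lsum (map f (flat_map g l)) = lsum (map (fun x => lsum (map f (g x))) l).
Proof. induction l; simpl; auto. rewrite map_app, lsum_app, IHl; auto. Qed.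

Lemma lsum_seq n f : lsum (map f (seq 0 n)) = fsum n f.
Proof.
  induction n; [simpl; auto|]. rewrite seq_S, map_app, lsum_app, IHn. simpl. lra.
Qed.

Lemma lsum_mulr {A} (f : A -> R) c l : lsum (map (fun x => f x * c) l) = lsum (map f l) * c.
Proof. induction l; simpl; [lra|]. rewrite IHl; lra. Qed.

Lemma lsum_mull {A} (f : A -> R) c l : lsum (map (fun x => c * f x) l) = c * lsum (map f l).
Proof. induction l; simpl; [lra|]. rewrite IHl; lra. Qed.

Lemma lsum_fsum {A} (F : A -> nat -> R) m l :
  lsum (map (fun x => fsum m (F x)) l) = fsum m (fun j => lsum (map (fun x => F x j) l)).
Proof. induction l; simpl. symmetry; apply fsum_zero; auto. rewrite IHl, <- fsum_plus; auto. Qed.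

Lemma lsum_ext {A} (f g : A -> R) l : (forall x, f x = g x) -> lsum (map f l) = lsum (map g l).
Proof. intros H; induction l; simpl; auto. rewrite H, IHl; auto. Qed.

Section Comb.
Variable kap : nat -> R.
Definition hc (c : list nat) := lprod (map kap c).
Definition Pv (n : nat) := lsum (map hc (compositions n)).

Lemma hc_cons a l : lsum (map (fun x => hc (a :: x)) l) = kap a * lsum (map hc l).
Proof. rewrite <- lsum_mull. apply lsum_ext. intros; reflexivity. Qed.

Lemma comps_S_sum (f : list nat -> R) n :
  lsum (map f (compositions (S n))) =
  fsum (S n) (fun k => lsum (map (fun r => f (S k :: r)) (compsF n (n - k)))).
Proof.
  unfold compositions. cbn [compsF]. rewrite lsum_flat_map, lsum_seq.
  apply fsum_ext; intros k _. rewrite map_map. auto.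
Qed.

Lemma compsF_fuel : forall fuel n, (n <= fuel)%nat ->
  lsum (map hc (compsF (S fuel) n)) = lsum (map hc (compsF fuel n)).
Proof.
  induction fuel; intros n Hn.
  - assert (n = 0%nat) by lia; subst; reflexivity.
  - destruct n as [|n']; [reflexivity|].
    change (compsF (S (S fuel)) (S n')) with
      (flat_map (fun k => map (cons (S k)) (compsF (S fuel) (S n' - S k))) (seq 0 (S n'))).
    change (compsF (S fuel) (S n')) with
      (flat_map (fun k => map (cons (S k)) (compsF fuel (S n' - S k))) (seq 0 (S n'))).
    rewrite !lsum_flat_map, !lsum_seq. apply fsum_ext; intros k Hk.
    rewrite !map_map, !hc_cons.
    f_equal. apply IHfuel. lia.
Qed.

Lemma compsF_P : forall d fuel n, fuel = (n + d)%nat -> lsum (map hc (compsF fuel n)) = Pv n.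
Proof.
  induction d; intros fuel n ->.
  - rewrite Nat.add_0_r; reflexivity.
  - rewrite Nat.add_succ_r, compsF_fuel by lia. apply IHd; auto.
Qed.

Lemma Pv_0 : Pv 0 = 1.
Proof. unfold Pv, compositions; simpl. unfold hc; simpl. lra. Qed.

Lemma Pv_S n : Pv (S n) = fsum (S n) (fun k => kap (S k) * Pv (n - k)).
Proof.
  unfold Pv at 1. rewrite comps_S_sum. apply fsum_ext; intros k Hk.
  rewrite hc_cons. f_equal. apply (compsF_P k). lia.
Qed.
End Comb.

Lemma lsum_flat_map' {A} (g : A -> list R) l :
  lsum (flat_map g l) = lsum (map (fun x => lsum (g x)) l).
Proof. induction l; simpl; auto. rewrite lsum_app, IHl; auto. Qed.

Lemma double_formula (kap : nat -> R) (kap2 : nat -> nat -> R) n m :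
  lsum (flat_map (fun c1 => map (fun c2 =>
        match c1, c2 with
        | n1 :: r1, m1 :: r2 =>
            lprod (map kap r1) * (kap2 n1 m1 + kap n1 * kap m1) * lprod (map kap r2)
        | _, _ => 0
        end) (compositions (S m))) (compositions (S n)))
  = fsum (S n) (fun k => fsum (S m) (fun l =>
       Pv kap (n - k) * (kap2 (S k) (S l) + kap (S k) * kap (S l)) * Pv kap (m - l))).
Proof.
  rewrite lsum_flat_map'.
  rewrite (comps_S_sum (fun c1 => lsum (map _ (compositions (S m))))).
  apply fsum_ext; intros k Hk.
  erewrite lsum_ext.
  2:{ intros r1. rewrite comps_S_sum. reflexivity. }
  rewrite lsum_fsum. apply fsum_ext; intros l Hl.
  erewrite lsum_ext.
  2:{ intros r1. rewrite (lsum_mull (fun x => hc kap x)). reflexivity. }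
  replace (lsum (map (fun x => hc kap x) (compsF m (m - l)))) with (Pv kap (m - l))
    by (symmetry; apply (compsF_P kap l); lia).
  rewrite lsum_mulr, lsum_mulr.
  replace (lsum (map (fun x => lprod (map kap x)) (compsF n (n - k)))) with (Pv kap (n - k))
    by (symmetry; apply (compsF_P kap k); lia).
  lra.
Qed.


Definition dot (N : nat) (u v : vec) := fsum N (fun k => u k * v k).

Fixpoint xf (N : nat) (A : mat) (n : nat) : vec :=
  match n with
  | O => fun _ => 1
  | S n' => mvec N (mtr A) (xf N A n')
  end.

Lemma mmul_assoc N X Y Z i j : mmul N (mmul N X Y) Z i j = mmul N X (mmul N Y Z) i j.
Proof.
  unfold mmul. erewrite fsum_ext. 2:{ intros k _. rewrite <- fsum_scal_r. reflexivity. }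
  rewrite fsum_swap. apply fsum_ext; intros l _. rewrite <- fsum_scal_l. apply fsum_ext; intros; lra.
Qed.

Lemma mid_col N k : (k < N)%nat -> fsum N (fun i => mid i k) = 1.
Proof. intros H. rewrite <- (fsum_mid_r N k (fun _ => 1)) by auto. apply fsum_ext; intros; lra. Qed.

Lemma mid_row N k : (k < N)%nat -> fsum N (fun j => mid k j) = 1.
Proof. intros H. rewrite <- (fsum_mid_l N k (fun _ => 1)) by auto. apply fsum_ext; intros; lra. Qed.

Lemma mpow_S_r N A n i j : (i < N)%nat -> (j < N)%nat ->
  mpow N A (S n) i j = mmul N (mpow N A n) A i j.
Proof.
  revert i j. induction n; intros i j Hi Hj.
  - simpl. unfold mmul. rewrite fsum_mid_r by auto. rewrite fsum_mid_l by auto. auto.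
  - change (mpow N A (S (S n)) i j) with (mmul N A (mpow N A (S n)) i j).
    unfold mmul at 1. rewrite (fsum_ext _ _ (fun k => A i k * mmul N (mpow N A n) A k j)).
    2:{ intros k Hk. rewrite IHn by auto. auto. }
    change (fsum N (fun k => A i k * mmul N (mpow N A n) A k j)) with (mmul N A (mmul N (mpow N A n) A) i j).
    rewrite <- mmul_assoc. reflexivity.
Qed.

Lemma colsum N A n k : (k < N)%nat -> fsum N (fun i => mpow N A n i k) = xf N A n k.
Proof.
  revert k. induction n; intros k Hk.
  - simpl. apply mid_col; auto.
  - rewrite (fsum_ext _ _ (fun i => mmul N (mpow N A n) A i k)).
    2:{ intros i Hi. apply mpow_S_r; auto. }
    simpl. unfold mmul, mvec, mtr. rewrite fsum_swap. apply fsum_ext; intros l Hl.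
    rewrite fsum_scal_r, IHn by auto. lra.
Qed.

Lemma rowsum N A m k : (k < N)%nat -> fsum N (fun j => mpow N (mtr A) m k j) = xf N A m k.
Proof.
  revert k. induction m; intros k Hk.
  - simpl. apply mid_row; auto.
  - simpl. unfold mmul, mvec. rewrite fsum_swap. apply fsum_ext; intros l Hl.
    rewrite fsum_scal_l, IHm by auto. lra.
Qed.

Lemma total_sum N A n m :
  fsum N (fun i => fsum N (fun j => mmul N (mpow N A n) (mpow N (mtr A) m) i j))
  = dot N (xf N A n) (xf N A m).
Proof.
  unfold mmul. erewrite fsum_ext. 2:{ intros i _. rewrite fsum_swap. reflexivity. }
  rewrite fsum_swap. unfold dot. apply fsum_ext; intros k Hk.
  rewrite <- colsum, <- rowsum by auto. rewrite <- fsum_scal_r. apply fsum_ext; intros i _.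
  rewrite <- fsum_scal_l. auto.
Qed.

Lemma mpow_scale N c W n i j : mpow N (mscale c W) n i j = c ^ n * mpow N W n i j.
Proof.
  revert i j; induction n; intros i j; simpl; [lra|].
  unfold mmul. rewrite <- fsum_scal_l. apply fsum_ext; intros k _. rewrite IHn. unfold mscale. lra.
Qed.

Lemma dot_sym N u v : dot N u v = dot N v u.
Proof. unfold dot; apply fsum_ext; intros; lra. Qed.

Lemma powerRZ_pred x k : x <> 0 -> powerRZ x (Z.of_nat k - 1) * x = x ^ k.
Proof.
  intros Hx. rewrite pow_powerRZ. rewrite <- (powerRZ_1 x) at 2.
  rewrite <- powerRZ_add by auto. f_equal. lia.
Qed.

Lemma dot_mu N W0 c n m : (1 <= N)%nat ->
  dot N (xf N (mscale c W0) n) (xf N (mscale c W0) m)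
  = INR N * ((INR N * c) ^ (n + m) * mu N W0 n m).
Proof.
  intros HN. rewrite <- total_sum.
  change (mtr (mscale c W0)) with (mscale c (mtr W0)).
  assert (HN' : INR N <> 0) by (apply not_0_INR; lia).
  unfold mu, mavg.
  set (S0 := fsum N (fun i => fsum N (fun j => mmul N (mpow N W0 n) (mpow N (mtr W0) m) i j))).
  assert (E : fsum N (fun i => fsum N (fun j =>
       mmul N (mpow N (mscale c W0) n) (mpow N (mscale c (mtr W0)) m) i j)) = c ^ (n + m) * S0).
  { unfold S0. rewrite <- fsum_scal_l. apply fsum_ext; intros i _. rewrite <- fsum_scal_l.
    apply fsum_ext; intros j _. unfold mmul. rewrite <- fsum_scal_l. apply fsum_ext; intros k _.
    rewrite !mpow_scale, pow_add. lra. }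
  rewrite E. pose proof (powerRZ_pred (INR N) (n + m) HN') as Hp.
  assert (Hpz : powerRZ (INR N) (Z.of_nat (n + m) - 1) <> 0) by (apply powerRZ_NOR; auto).
  rewrite Rpow_mult_distr, <- Hp. field. auto.
Qed.


Section Seqs.
Variables (g : R) (kap : nat -> R) (kap2 : nat -> nat -> R).

Definition kp k := g ^ k * kap k.
Definition pp n := g ^ n * Pv kap n.
Definition ce i j := g ^ (i + j) * kap2 i j.
Definition ee i j := match i, j with
  | O, O => 1 | S _, S _ => ce i j | _, _ => 0 end.

Lemma pp_0 : pp 0 = 1.
Proof. unfold pp. rewrite Pv_0. simpl; lra. Qed.

Lemma pp_S n : pp (S n) = fsum (S n) (fun k => kp (S k) * pp (n - k)).
Proof.
  unfold pp at 1. rewrite Pv_S, <- fsum_scal_l. apply fsum_ext; intros k Hk.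
  unfold kp, pp. replace (S n) with (S k + (n - k))%nat at 1 by lia. rewrite pow_add. lra.
Qed.

Lemma rhs_simpl n m :
  fsum (S n) (fun i => fsum (S m) (fun j => pp (n - i) * pp (m - j) * ee i j))
  = pp n * pp m + fsum n (fun i => fsum m (fun j => pp (n - S i) * pp (m - S j) * ce (S i) (S j))).
Proof.
  rewrite fsum_shift. rewrite fsum_shift. rewrite !Nat.sub_0_r. simpl (ee 0 0).
  rewrite (fsum_zero m (fun i => pp n * pp (m - S i) * ee 0 (S i))) by (intros; simpl; lra).
  rewrite (fsum_ext n _ (fun i => fsum m (fun j => pp (n - S i) * pp (m - S j) * ce (S i) (S j)))).
  2:{ intros i Hi. rewrite fsum_shift. simpl (ee (S i) 0). rewrite Nat.sub_0_r. simpl (ee (S i) (S _)).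
      lra. }
  lra.
Qed.
End Seqs.

Lemma m_formula N W0 c kap kap2 : (1 <= N)%nat -> motif_cumulants N W0 kap kap2 ->
  let A := mscale c W0 in let g := INR N * c in
  forall n m, dot N (xf N A n) (xf N A m) =
    INR N * fsum (S n) (fun i => fsum (S m) (fun j => pp g kap (n - i) * pp g kap (m - j) * ee g kap2 i j)).
Proof.
  intros HN [Hm1 Hm2] A g n m. rewrite rhs_simpl.
  assert (H0 : forall n, (1 <= n)%nat -> dot N (xf N A n) (xf N A 0) = INR N * pp g kap n).
  { intros k Hk. unfold A. rewrite dot_mu by auto. rewrite Nat.add_0_r. fold g.
    rewrite Hm1 by auto. unfold pp. reflexivity. }
  destruct n as [|n'], m as [|m'].
  - simpl. rewrite pp_0. unfold dot. rewrite fsum_const. lra.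
  - rewrite dot_sym, H0 by lia. simpl fsum. rewrite pp_0. lra.
  - rewrite H0 by lia. rewrite pp_0. rewrite (fsum_zero (S n')) by (intros; simpl; auto). lra.
  - unfold A. rewrite dot_mu by auto. fold g. rewrite Hm2 by lia.
    rewrite double_formula. rewrite (pp_S g kap n'), (pp_S g kap m').
    rewrite <- fsum_scal_l.
    replace (fsum (S n') (fun k => kp g kap (S k) * pp g kap (n' - k)) *
             fsum (S m') (fun k => kp g kap (S k) * pp g kap (m' - k)))
      with (fsum (S n') (fun k => fsum (S m') (fun l =>
             kp g kap (S k) * pp g kap (n' - k) * (kp g kap (S l) * pp g kap (m' - l))))).
    2:{ rewrite <- fsum_scal_r. apply fsum_ext; intros k _. rewrite <- fsum_scal_l. reflexivity. }
    simpl (S n' - S _)%nat. simpl (S m' - S _)%nat.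
    rewrite <- fsum_plus. f_equal. apply fsum_ext; intros k Hk.
    rewrite <- fsum_scal_l, <- fsum_plus. apply fsum_ext; intros l Hl.
    unfold pp, kp, ce.
    replace (S n' + S m')%nat with ((n' - k) + (m' - l) + (S k + S l))%nat by lia.
    rewrite !pow_add. ring.
Qed.


Fixpoint zf (N : nat) (A : mat) (g : R) (kap : nat -> R) (n : nat) : vec :=
  match n with
  | O => fun _ => 1
  | S n' => fun i => mvec N (mtr A) (zf N A g kap n') i - kp g kap (S n')
  end.

Lemma x_Pz N A g kap n i :
  xf N A n i = fsum (S n) (fun j => pp g kap (n - j) * zf N A g kap j i).
Proof.
  revert i. induction n; intros i.
  - simpl. rewrite pp_0. lra.
  - change (xf N A (S n) i) with (mvec N (mtr A) (xf N A n) i). unfold mvec.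
    rewrite (fsum_ext N _ (fun l => mtr A i l * fsum (S n) (fun j => pp g kap (n - j) * zf N A g kap j l)))
      by (intros; rewrite IHn; auto).
    rewrite (fsum_ext N _ (fun l => fsum (S n) (fun j => pp g kap (n - j) * (mtr A i l * zf N A g kap j l))))
      by (intros; rewrite <- fsum_scal_l; apply fsum_ext; intros; lra).
    rewrite fsum_swap. rewrite (fsum_shift (S n)). simpl (S n - S _)%nat. rewrite Nat.sub_0_r.
    rewrite pp_S. simpl (zf N A g kap 0 i). rewrite Rmult_1_r, <- fsum_plus.
    apply fsum_ext; intros j Hj. rewrite fsum_scal_l. simpl. unfold mvec. lra.
Qed.

Lemma dot_bilin N n m (a b : nat -> R) (u v : nat -> vec) :
  dot N (fun k => fsum n (fun i => a i * u i k)) (fun k => fsum m (fun j => b j * v j k))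
  = fsum n (fun i => fsum m (fun j => a i * b j * dot N (u i) (v j))).
Proof.
  unfold dot. rewrite (fsum_ext N _ (fun k => fsum n (fun i => fsum m (fun j => a i * b j * (u i k * v j k))))).
  2:{ intros k _. rewrite <- fsum_scal_r. apply fsum_ext; intros i _. rewrite <- fsum_scal_l.
      apply fsum_ext; intros; lra. }
  rewrite fsum_swap. apply fsum_ext; intros i _. rewrite fsum_swap. apply fsum_ext; intros j _.
  rewrite fsum_scal_l; auto.
Qed.

Lemma tri_zero (p : nat -> R) (T : nat -> nat -> R) : p 0%nat = 1 ->
  (forall n m, fsum (S n) (fun i => fsum (S m) (fun j => p (n - i)%nat * p (m - j)%nat * T i j)) = 0) ->
  forall n m, T n m = 0.
Proof.
  intros Hp H n. induction n as [n IHn] using (well_founded_induction lt_wf).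
  intros m. induction m as [m IHm] using (well_founded_induction lt_wf).
  specialize (H n m). cbn [fsum] in H.
  rewrite (fsum_zero n) in H.
  2:{ intros i Hi. rewrite fsum_zero. rewrite IHn by auto. lra. intros j _. rewrite IHn by auto. lra. }
  rewrite (fsum_zero m) in H.
  2:{ intros j Hj. rewrite IHm by auto. lra. }
  rewrite !Nat.sub_diag, Hp in H. lra.
Qed.

Lemma zz N W0 c kap kap2 : (1 <= N)%nat -> motif_cumulants N W0 kap kap2 ->
  let A := mscale c W0 in let g := INR N * c in
  forall i j, dot N (zf N A g kap i) (zf N A g kap j) = INR N * ee g kap2 i j.
Proof.
  intros HN Hmc A g i j.
  apply Rminus_diag_uniq. revert i j.
  apply (tri_zero (pp g kap) (fun i j => dot N (zf N A g kap i) (zf N A g kap j) - INR N * ee g kap2 i j) (pp_0 g kap)).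
  intros n m.
  pose proof (m_formula N W0 c kap kap2 HN Hmc n m) as H. fold A g in H.
  rewrite (functional_extensionality (xf N A n) _ (x_Pz N A g kap n)) in H.
  rewrite (functional_extensionality (xf N A m) _ (x_Pz N A g kap m)) in H.
  rewrite dot_bilin in H.
  match type of H with ?L = ?Rr => transitivity (L - Rr) end.
  - rewrite <- fsum_scal_l, <- fsum_minus. apply fsum_ext; intros i _.
    rewrite <- fsum_scal_l, <- fsum_minus. apply fsum_ext; intros j _. ring.
  - rewrite H; ring.
Qed.


Lemma cv_const c : Un_cv (fun _ => c) c.
Proof. intros eps He. exists 0%nat. intros. unfold R_dist. rewrite Rminus_diag, Rabs_R0. auto. Qed.

Lemma cv_ext u v l : (forall n, u n = v n) -> Un_cv u l -> Un_cv v l.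
Proof. intros H. replace v with u by (apply functional_extensionality; auto). auto. Qed.

Lemma cv_shift u l : Un_cv u l -> Un_cv (fun n => u (S n)) l.
Proof. intros H eps He. destruct (H eps He) as [M HM]. exists M. intros n Hn. apply HM. lia. Qed.

Lemma cv_unshift u l : Un_cv (fun n => u (S n)) l -> Un_cv u l.
Proof. intros H eps He. destruct (H eps He) as [M HM]. exists (S M). intros n Hn.
  destruct n; [lia|]. apply HM. lia. Qed.

Lemma fsum_cv n (F : nat -> nat -> R) (l : nat -> R) :
  (forall k, (k < n)%nat -> Un_cv (fun K => F K k) (l k)) ->
  Un_cv (fun K => fsum n (F K)) (fsum n l).
Proof.
  induction n; intros H; simpl.
  - apply cv_const.
  - apply CV_plus. apply IHn; intros; apply H; lia. apply H; lia.
Qed.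

Lemma cv_abs_le u l s : Un_cv u l -> (forall n, Rabs (u n) <= s) -> Rabs l <= s.
Proof.
  intros H Hs. destruct (Rle_lt_dec (Rabs l) s) as [|Hlt]; auto.
  destruct (H (Rabs l - s)) as [M HM]; [lra|].
  specialize (HM M (le_n _)). specialize (Hs M). unfold R_dist in HM.
  pose proof (Rabs_triang (u M) (l - u M)). replace (u M + (l - u M)) with l in H0 by ring.
  rewrite Rabs_minus_sym in HM. lra.
Qed.

Lemma double_shift K (F : nat -> nat -> R) :
  fsum (S K) (fun i => fsum (S K) (fun j => F i j)) =
  F 0%nat 0%nat + fsum K (fun j => F 0%nat (S j)) + fsum K (fun i => F (S i) 0%nat)
  + fsum K (fun i => fsum K (fun j => F (S i) (S j))).
Proof.
  rewrite fsum_shift, fsum_shift. rewrite (fsum_ext K (fun i => fsum (S K) (fun j => F (S i) j)) (fun i => F (S i) 0%nat + fsum K (fun j => F (S i) (S j)))).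
  2:{ intros; apply fsum_shift. } rewrite fsum_plus. lra.
Qed.

Lemma dot_sums N n m (u v : nat -> vec) :
  dot N (fun k => fsum n (fun i => u i k)) (fun k => fsum m (fun j => v j k))
  = fsum n (fun i => fsum m (fun j => dot N (u i) (v j))).
Proof.
  pose proof (dot_bilin N n m (fun _ => 1) (fun _ => 1) u v) as H.
  replace (fun k => fsum n (fun i => u i k)) with (fun k => fsum n (fun i => 1 * u i k))
    by (apply functional_extensionality; intros; apply fsum_ext; intros; lra).
  replace (fun k => fsum m (fun j => v j k)) with (fun k => fsum m (fun j => 1 * v j k))
    by (apply functional_extensionality; intros; apply fsum_ext; intros; lra).
  rewrite H. apply fsum_ext; intros; apply fsum_ext; intros; lra.
Qed.

Section Analysis.
Variables (N : nat) (A : mat) (g : R) (kap : nat -> R) (kap2 : nat -> nat -> R).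
Hypothesis HN : (1 <= N)%nat.
Hypothesis Hzz : forall i j, dot N (zf N A g kap i) (zf N A g kap j) = INR N * ee g kap2 i j.
Variable Bd : R.
Hypothesis HB : forall K, dsum K (fun n m => Rabs g ^ (n + m) * Rabs (kap2 n m)) <= Bd.

Definition Zs K : vec := fun k => fsum K (fun i => zf N A g kap i k).
Definition AE K := fsum K (fun i => fsum K (fun j => Rabs (ee g kap2 i j))).

Lemma INR_N_pos : 0 < INR N.
Proof. apply lt_0_INR; lia. Qed.

Lemma dotZ_S K : dot N (Zs (S K)) (Zs (S K)) = INR N * (1 + dsum K (ce g kap2)).
Proof.
  unfold Zs. rewrite dot_sums. rewrite (fsum_ext _ _ (fun i => fsum (S K) (fun j => INR N * ee g kap2 i j))).
  2:{ intros; apply fsum_ext; intros; auto. }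
  rewrite double_shift. simpl (ee g kap2 0 0). rewrite !fsum_zero by (intros; simpl; lra).
  unfold dsum.
  replace (fsum K (fun i => fsum K (fun j => INR N * ee g kap2 (S i) (S j)))) with
    (INR N * fsum K (fun i => fsum K (fun j => ce g kap2 (S i) (S j)))).
  ring.
  rewrite <- fsum_scal_l. apply fsum_ext; intros; rewrite <- fsum_scal_l; apply fsum_ext; intros; reflexivity.
Qed.

Lemma AE_block K d : AE K + fsum d (fun i => fsum d (fun j => Rabs (ee g kap2 (K + i) (K + j)))) <= AE (K + d).
Proof.
  unfold AE. rewrite fsum_add_range.
  rewrite (fsum_ext K (fun i => fsum (K + d) (fun j => Rabs (ee g kap2 i j))) (fun i => fsum K (fun j => Rabs (ee g kap2 i j)) + fsum d (fun j => Rabs (ee g kap2 i (K + j)))))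
    by (intros; apply fsum_add_range).
  rewrite (fsum_ext d (fun i => fsum (K + d) (fun j => Rabs (ee g kap2 (K + i) j))) (fun i => fsum K (fun j => Rabs (ee g kap2 (K + i) j)) + fsum d (fun j => Rabs (ee g kap2 (K + i) (K + j)))))
    by (intros; apply fsum_add_range).
  rewrite !fsum_plus.
  assert (0 <= fsum K (fun i => fsum d (fun j => Rabs (ee g kap2 i (K + j))))).
  { apply fsum_nonneg; intros; apply fsum_nonneg; intros; apply Rabs_pos. }
  assert (0 <= fsum d (fun i => fsum K (fun j => Rabs (ee g kap2 (K + i) j)))).
  { apply fsum_nonneg; intros; apply fsum_nonneg; intros; apply Rabs_pos. }
  lra.
Qed.

Lemma AE_bound K : AE K <= 1 + Bd.
Proof.
  assert (0 <= Bd) by (specialize (HB 0%nat); simpl in HB; unfold dsum in HB; simpl in HB; lra).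
  destruct K. unfold AE; simpl; lra.
  unfold AE. rewrite double_shift. simpl (ee g kap2 0 0). rewrite !fsum_zero by (intros; simpl; rewrite Rabs_R0; lra).
  specialize (HB K). unfold dsum in HB.
  replace (fsum K (fun i => fsum K (fun j => Rabs (ee g kap2 (S i) (S j))))) with
    (fsum K (fun i => fsum K (fun j => Rabs g ^ (S i + S j) * Rabs (kap2 (S i) (S j))))).
  rewrite Rabs_R1; lra.
  apply fsum_ext; intros; apply fsum_ext; intros. simpl (ee _ _ (S _) (S _)). unfold ce.
  rewrite Rabs_mult, RPow_abs. auto.
Qed.

Lemma AE_grow : Un_growing AE.
Proof.
  intros n. pose proof (AE_block n 1). rewrite Nat.add_1_r in H.
  assert (0 <= fsum 1 (fun i => fsum 1 (fun j => Rabs (ee g kap2 (n + i) (n + j))))).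
  { apply fsum_nonneg; intros; apply fsum_nonneg; intros; apply Rabs_pos. } lra.
Qed.

Lemma AE_cauchy : Cauchy_crit AE.
Proof.
  apply CV_Cauchy. apply growing_cv. apply AE_grow.
  exists (1 + Bd). intros x [n ->]. apply AE_bound.
Qed.

Lemma Zs_diff K d k : Zs (K + d) k - Zs K k = fsum d (fun i => zf N A g kap (K + i) k).
Proof. unfold Zs. rewrite fsum_add_range. ring. Qed.

Lemma Zs_cauchy k : (k < N)%nat -> Cauchy_crit (fun K => Zs K k).
Proof.
  intros Hk eps He.
  pose proof INR_N_pos as HNp.
  destruct (AE_cauchy (eps * eps / INR N)) as [M HM].
  { apply Rdiv_lt_0_compat; nra. }
  exists M. intros n m Hn Hm.
  assert (Hmain : forall n d, (n >= M)%nat -> (n + d >= M)%nat -> R_dist (Zs (n + d) k) (Zs n k) < eps).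
  { clear n m Hn Hm. intros n d Hn Hnd. unfold R_dist. rewrite Zs_diff.
    set (Dv := fun k => fsum d (fun i => zf N A g kap (n + i) k)).
    assert (H1 : Dv k * Dv k <= dot N Dv Dv).
    { unfold dot. apply (fsum_ge_term N (fun k => Dv k * Dv k)); auto. intros; nra. }
    assert (H2 : dot N Dv Dv = INR N * fsum d (fun i => fsum d (fun j => ee g kap2 (n + i) (n + j)))).
    { unfold Dv. rewrite dot_sums. rewrite <- fsum_scal_l. apply fsum_ext; intros.
      rewrite <- fsum_scal_l. apply fsum_ext; intros. apply Hzz. }
    assert (H3 : fsum d (fun i => fsum d (fun j => ee g kap2 (n + i) (n + j))) <=
                 fsum d (fun i => fsum d (fun j => Rabs (ee g kap2 (n + i) (n + j))))).
    { eapply Rle_trans; [apply Rle_abs|]. eapply Rle_trans; [apply fsum_abs|].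
      apply fsum_le; intros. apply fsum_abs. }
    pose proof (AE_block n d).
    specialize (HM (n + d)%nat n Hnd Hn). unfold R_dist in HM.
    assert (H4 : AE (n + d) - AE n < eps * eps / INR N) by (eapply Rle_lt_trans; [apply Rle_abs| auto]).
    assert (H5 : Dv k * Dv k < eps * eps).
    { assert (INR N * (AE (n + d) - AE n) < eps * eps).
      { apply (Rmult_lt_compat_l (INR N)) in H4; auto. unfold Rdiv in H4.
        replace (INR N * (eps * eps * / INR N)) with (eps * eps) in H4 by (field; lra). auto. }
      nra. }
    fold (Dv k). destruct (Rle_lt_dec eps (Rabs (Dv k))); [|auto].
    assert (H6 : eps * eps <= Rabs (Dv k) * Rabs (Dv k)) by (apply Rmult_le_compat; lra).
    rewrite <- Rabs_mult, Rabs_right in H6 by nra. lra. }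
  destruct (Nat.le_ge_cases n m).
  - rewrite R_dist_sym. replace m with (n + (m - n))%nat by lia. apply Hmain; lia.
  - replace n with (m + (n - m))%nat by lia. apply Hmain; lia.
Qed.

Definition Zlim : vec := fun k => epsilon (inhabits 0) (fun l => Un_cv (fun K => Zs K k) l).

Lemma Zlim_cv k : (k < N)%nat -> Un_cv (fun K => Zs K k) (Zlim k).
Proof.
  intros Hk. unfold Zlim. apply epsilon_spec.
  destruct (R_complete _ (Zs_cauchy k Hk)) as [l Hl]. exists l; auto.
Qed.

Lemma dotZ_cv : Un_cv (fun K => dot N (Zs K) (Zs K)) (dot N Zlim Zlim).
Proof. unfold dot. apply fsum_cv. intros k Hk. apply CV_mult; apply Zlim_cv; auto. Qed.

Definition L2 := dot N Zlim Zlim / INR N - 1.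

Lemma L2_cv : Un_cv (fun K => dsum K (ce g kap2)) L2.
Proof.
  pose proof INR_N_pos.
  apply (cv_ext (fun K => dot N (Zs (S K)) (Zs (S K)) * / INR N - 1)).
  { intros K. rewrite dotZ_S. field. lra. }
  unfold L2. apply CV_minus; [|apply cv_const]. apply CV_mult; [|apply cv_const].
  apply (cv_shift (fun K => dot N (Zs K) (Zs K))). apply dotZ_cv.
Qed.

Lemma L2_eq : dot N Zlim Zlim = INR N * (1 + L2).
Proof. pose proof INR_N_pos. unfold L2. field. lra. Qed.

Definition KP K := fsum K (fun n => kp g kap (S n)).

Lemma mvec_Zs K k : mvec N (mtr A) (Zs K) k = Zs (S K) k - 1 + KP K.
Proof.
  unfold mvec, Zs, KP. rewrite (fsum_shift K). simpl (zf N A g kap 0 k).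
  rewrite (fsum_ext N _ (fun l => fsum K (fun i => mtr A k l * zf N A g kap i l)))
    by (intros; rewrite fsum_scal_l; auto).
  rewrite fsum_swap. replace (1 + fsum K (fun i => zf N A g kap (S i) k) - 1 +
    fsum K (fun n => kp g kap (S n))) with (fsum K (fun i => zf N A g kap (S i) k) + fsum K (fun n => kp g kap (S n))) by ring.
  rewrite <- fsum_plus.
  apply fsum_ext; intros. simpl. unfold mvec. ring.
Qed.

Lemma mvec_cv M k : Un_cv (fun K => mvec N M (Zs K) k) (mvec N M Zlim k).
Proof. unfold mvec. apply fsum_cv. intros l Hl. apply CV_mult. apply cv_const. apply Zlim_cv; auto. Qed.

Definition L1 := mvec N (mtr A) Zlim 0%nat - Zlim 0%nat + 1.

Lemma KP_cv : Un_cv KP L1.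
Proof.
  apply (cv_ext (fun K => mvec N (mtr A) (Zs K) 0%nat - Zs (S K) 0%nat + 1)).
  { intros K. rewrite mvec_Zs. ring. }
  unfold L1. apply CV_plus; [|apply cv_const]. apply CV_minus. apply mvec_cv.
  apply (cv_shift (fun K => Zs K 0%nat)). apply Zlim_cv; lia.
Qed.

Lemma Zlim_eq k : (k < N)%nat -> mvec N (mtr A) Zlim k = Zlim k - 1 + L1.
Proof.
  intros Hk. apply (UL_sequence (fun K => mvec N (mtr A) (Zs K) k)). apply mvec_cv.
  apply (cv_ext (fun K => Zs (S K) k - 1 + KP K)). intros; rewrite mvec_Zs; auto.
  apply CV_plus. apply CV_minus. apply (cv_shift (fun K => Zs K k)). apply Zlim_cv; auto.
  apply cv_const. apply KP_cv.
Qed.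

Lemma L1_sum : infinite_sum (fun k => g ^ (S k) * kap (S k)) L1.
Proof.
  intros eps He. destruct (KP_cv eps He) as [M HM]. exists M. intros n Hn.
  rewrite sum_f_R0_fsum. change (R_dist (KP (S n)) L1 < eps). apply HM. lia.
Qed.

Lemma L1_abs s : infinite_sum (fun k => Rabs g ^ (S k) * Rabs (kap (S k))) s -> Rabs L1 <= s.
Proof.
  intros Hs. apply (cv_abs_le KP). apply KP_cv.
  set (f := fun k => Rabs g ^ (S k) * Rabs (kap (S k))).
  assert (Hf : forall k, 0 <= f k). { intros; unfold f. apply Rmult_le_pos. apply pow_le, Rabs_pos. apply Rabs_pos. }
  assert (Hg : Un_growing (sum_f_R0 f)). { intros n; simpl. pose proof (Hf (S n)). lra. }
  assert (Hle : forall n, sum_f_R0 f n <= s) by (apply growing_ineq; auto).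
  intros K. unfold KP. eapply Rle_trans; [apply fsum_abs|].
  destruct K. simpl. pose proof (Hle 0%nat). simpl in H. pose proof (Hf 0%nat). lra.
  eapply Rle_trans; [|apply (Hle K)]. rewrite (sum_f_R0_fsum f K).
  apply fsum_le; intros. unfold kp, f. rewrite Rabs_mult, RPow_abs. lra.
Qed.
End Analysis.


Lemma inv_exists' N B : (1 <= N)%nat ->
  (forall v : vec, (forall i, (i < N)%nat -> fsum N (fun j => B i j * v j) = 0) ->
     forall i, (i < N)%nat -> v i = 0) ->
  exists C, meq N (mmul N B C) mid /\ meq N (mmul N C B) mid.
Proof.
  intros HN Hinj. destruct N as [|n]; [lia|].
  destruct (MC.inv_exists n B Hinj) as [C [H1 H2]]. exists C. split; intros i j Hi Hj; unfold mmul; auto.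
Qed.

Lemma minv_spec N B : (exists C, meq N (mmul N B C) mid /\ meq N (mmul N C B) mid) ->
  meq N (mmul N B (minv N B)) mid /\ meq N (mmul N (minv N B) B) mid.
Proof. intros H. unfold minv. apply epsilon_spec. exact H. Qed.

Lemma inv_tr N A C : meq N (mmul N (msub mid A) C) mid -> meq N (mmul N C (msub mid A)) mid ->
  meq N (mmul N (msub mid (mtr A)) (mtr C)) mid /\ meq N (mmul N (mtr C) (msub mid (mtr A))) mid.
Proof.
  intros H1 H2. split; intros i j Hi Hj.
  - rewrite mid_sym, <- (H2 j i) by auto. unfold mmul, msub, mtr. apply fsum_ext; intros k _.
    rewrite (mid_sym i k). ring.
  - rewrite mid_sym, <- (H1 j i) by auto. unfold mmul, msub, mtr. apply fsum_ext; intros k _.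
    rewrite (mid_sym k j). ring.
Qed.

Lemma mmul_vec N X Y (v : vec) k :
  fsum N (fun j => mmul N X Y k j * v j) = fsum N (fun l => X k l * fsum N (fun j => Y l j * v j)).
Proof.
  unfold mmul. rewrite (fsum_ext N (fun j => fsum N (fun l => X k l * Y l j) * v j)
     (fun j => fsum N (fun l => X k l * Y l j * v j))) by (intros; symmetry; apply fsum_scal_r).
  rewrite fsum_swap. apply fsum_ext; intros. rewrite <- fsum_scal_l. apply fsum_ext; intros; ring.
Qed.

Theorem theorem1 (N : nat) (W0 : mat) (a w Sx : R)
  (kap : nat -> R) (kap2 : nat -> nat -> R) :
  (1 <= N)%nat ->
  0 < Sx ->
  spectral_radius_lt1 N (mscale (a * w) W0) ->
  motif_cumulants N W0 kap kap2 ->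
  let g := INR N * a * w in
  (exists s, infinite_sum (fun k => Rabs g ^ (S k) * Rabs (kap (S k))) s /\ s < 1) ->
  (exists B, forall K, dsum K (fun n m => Rabs g ^ (n + m) * Rabs (kap2 n m)) <= B) ->
  exists L1 L2,
    infinite_sum (fun k => g ^ (S k) * kap (S k)) L1 /\
    Un_cv (fun K => dsum K (fun n m => g ^ (n + m) * kap2 n m)) L2 /\
    mavg N (Sy N Sx (mscale (a * w) W0)) / Sx
      = / INR N * / ((1 - L1) ^ 2) * (1 + L2).
Proof.
  intros HN HSx Hsr Hmc g [s [Hs Hs1]] [Bd HB].
  assert (Eg : g = INR N * (a * w)) by (unfold g; ring).
  clearbody g. subst g.
  set (A := mscale (a * w) W0) in *.
  pose proof (zz N W0 (a * w) kap kap2 HN Hmc) as Hzz. cbv zeta in Hzz. fold A in Hzz.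
  set (gg := INR N * (a * w)) in *.
  exists (L1 N A gg kap), (L2 N A gg kap).
  split; [apply (L1_sum N A gg kap kap2 HN Hzz Bd HB)|].
  split; [apply (L2_cv N A gg kap kap2 HN Hzz Bd HB)|].
  pose proof (L1_abs N A gg kap kap2 HN Hzz Bd HB s Hs) as HL1.
  assert (HL1' : 1 - L1 N A gg kap <> 0) by (pose proof (Rle_abs (L1 N A gg kap)); lra).
  pose proof INR_N_pos N HN as HNp.
  set (B := msub mid A).
  assert (Hinj : forall v : vec, (forall i, (i < N)%nat -> fsum N (fun j => B i j * v j) = 0) ->
     forall i, (i < N)%nat -> v i = 0).
  { intros v Hv i Hi. destruct (Req_dec (v i) 0) as [|Hne]; auto. exfalso.
    assert (H : 1 * 1 + 0 * 0 < 1).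
    { apply (Hsr 1 0 v (fun _ => 0)). exists i; split; auto.
      intros k Hk. split.
      - specialize (Hv k Hk). unfold B, msub in Hv.
        rewrite (fsum_ext N _ (fun j => mid k j * v j - A k j * v j)) in Hv by (intros; ring).
        rewrite fsum_minus, fsum_mid_l in Hv by auto. unfold mvec. lra.
      - unfold mvec. rewrite fsum_zero by (intros; ring). ring. }
    lra. }
  destruct (minv_spec N B (inv_exists' N B HN Hinj)) as [HM1a HM1b].
  set (M1 := minv N B) in *.
  destruct (inv_tr N A M1 HM1a HM1b) as [HT1 HT2].
  set (B' := msub mid (mtr A)) in *.
  destruct (minv_spec N B' (ex_intro _ (mtr M1) (conj HT1 HT2))) as [HM2a HM2b].
  set (M2 := minv N B') in *.
  assert (HM21 : forall k i, (k < N)%nat -> (i < N)%nat -> M2 k i = M1 i k).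
  { intros k i Hk Hi. rewrite <- (fsum_mid_r N i (fun j => M2 k j)) by auto.
    rewrite (fsum_ext N _ (fun j => M2 k j * mmul N B' (mtr M1) j i)) by (intros; rewrite HT1; auto).
    change (fsum N (fun j => M2 k j * mmul N B' (mtr M1) j i)) with (mmul N M2 (mmul N B' (mtr M1)) k i).
    rewrite <- mmul_assoc. unfold mmul at 1.
    rewrite (fsum_ext N _ (fun l => mid k l * mtr M1 l i)) by (intros; rewrite HM2b; auto).
    rewrite fsum_mid_l by auto. reflexivity. }
  set (y := fun k => fsum N (fun j => M2 k j)).
  set (Z := Zlim N A gg kap). set (l1 := L1 N A gg kap).
  assert (HZy : forall k, (k < N)%nat -> Z k = (1 - l1) * y k).
  { intros k Hk. rewrite <- (fsum_mid_l N k Z) by auto.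
    rewrite (fsum_ext N _ (fun j => mmul N M2 B' k j * Z j)) by (intros; rewrite HM2b; auto).
    rewrite mmul_vec. unfold y. rewrite <- fsum_scal_l. apply fsum_ext; intros l Hl.
    assert (E : fsum N (fun j => B' l j * Z j) = 1 - l1).
    { unfold B', msub, mtr. rewrite (fsum_ext N _ (fun j => mid l j * Z j - A j l * Z j)) by (intros; ring).
      rewrite fsum_minus, fsum_mid_l by auto.
      pose proof (Zlim_eq N A gg kap kap2 HN Hzz Bd HB l Hl) as E. unfold mvec, mtr in E.
      fold Z l1 in E. rewrite E. ring. }
    rewrite E. ring. }
  assert (Hdot : dot N Z Z = (1 - l1) ^ 2 * dot N y y).
  { unfold dot. rewrite <- fsum_scal_l. apply fsum_ext; intros k Hk. rewrite HZy by auto. ring. }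
  pose proof (L2_eq N A gg kap HN) as HL2. fold Z in HL2.
  assert (Hsum : fsum N (fun i => fsum N (fun j => mscale Sx (mmul N M1 M2) i j)) = Sx * dot N y y).
  { unfold mscale, mmul, dot. rewrite <- fsum_scal_l. rewrite (fsum_ext N _ (fun i => fsum N (fun k => fsum N (fun j => Sx * (M1 i k * M2 k j))))).
    2:{ intros i _. rewrite fsum_swap. apply fsum_ext; intros k _. rewrite <- fsum_scal_l. apply fsum_ext; intros; ring. }
    rewrite fsum_swap. apply fsum_ext; intros k Hk.
    rewrite (fsum_ext N _ (fun i => Sx * M1 i k * y k)).
    2:{ intros i _. unfold y. cbv beta. rewrite <- fsum_scal_l. apply fsum_ext; intros; ring. }
    rewrite fsum_scal_r. unfold y at 1.
    rewrite (fsum_ext N (fun i => Sx * M1 i k) (fun i => Sx * M2 k i)) by (intros; rewrite HM21; auto).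
    rewrite fsum_scal_l. unfold y. change (fsum N (M2 k)) with (fsum N (fun j => M2 k j)). ring. }
  unfold mavg, Sy. fold B B' M1 M2. rewrite Hsum.
  assert (Hyy : dot N y y = INR N * (1 + L2 N A gg kap) / (1 - l1) ^ 2).
  { rewrite <- HL2, Hdot. field. auto. }
  rewrite Hyy. fold l1. field. unfold l1. repeat split; lra.
Qed.
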